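(* Assume $Q_{12}>0$. For any $\gamma>0$, $$H(\tilde C_i^{(n)}|\tilde{\mathbf X}_{3-i})\ge n[H(X_i|X_{3-i})-\gamma]+\log Q_{12},\quad i=1,2,$$ $$H(\tilde C_1^{(n)}\tilde C_2^{(n)})\ge n[H(X_1X_2)-\gamma]+\log Q_{12}.$$
   Context: Logs base 2. $\mathcal X_1,\mathcal X_2$ finite; $(X_1,X_2)\sim p_{X_1X_2}$, $(K_1,K_2)\sim p_{K_1K_2}$ on $\mathcal X_1\times\mathcal X_2$. At block length $n$, $(\mathbf X_1,\mathbf X_2)\sim p^n_{X_1X_2}$ i.i.d., $(\mathbf K_1,\mathbf K_2)\sim p^n_{K_1K_2}$ i.i.d., keys independent of sources. A distributed source encryption system: finite $\mathcal C_i^{(n)}$, maps $\Phi_i^{(n)}:\mathcal X_i^n\times\mathcal X_i^n\to\mathcal C_i^{(n)}$ (key, plaintext) and $\Psi^{(n)}$, such that there are maps $\phi_i^{(n)}$, $\psi^{(n)}$ with $\Psi^{(n)}(\mathbf k_1,\mathbf k_2,\Phi_1^{(n)}(\mathbf k_1,\mathbf x_1),\Phi_2^{(n)}(\mathbf k_2,\mathbf x_2))=\psi^{(n)}(\phi_1^{(n)}(\mathbf x_1),\phi_2^{(n)}(\mathbf x_2))$ for all arguments. $C_i^{(n)}:=\Phi_i^{(n)}(\mathbf K_i,\mathbf X_i)$. $\mathcal D^{(n)}:=\{(\mathbf x_1,\mathbf x_2):\psi^{(n)}(\phi_1^{(n)}(\mathbf x_1),\phi_2^{(n)}(\mathbf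 x_2))=(\mathbf x_1,\mathbf x_2)\}$. For $\gamma>0$, $\tilde{\mathcal A}^{(n)}_\gamma$ is the set of $(\mathbf x_1,\mathbf x_2)$ with $\bigl|\frac1n\log\frac1{p^n_{X_i|X_{3-i}}(\mathbf x_i|\mathbf x_{3-i})}-H(X_i|X_{3-i})\bigr|\le\gamma$ ($i=1,2$) and $\bigl|\frac1n\log\frac1{p^n_{X_1X_2}(\mathbf x_1,\mathbf x_2)}-H(X_1X_2)\bigr|\le\gamma$, and $\tilde{\mathcal D}^{(n)}_\gamma:=\tilde{\mathcal A}^{(n)}_\gamma\cap\mathcal D^{(n)}$. $Q_{12}:=p^n_{X_1X_2}(\tilde{\mathcal D}^{(n)}_\gamma)$. The random pair $(\tilde{\mathbf X}_1,\tilde{\mathbf X}_2)$ has law $p^n_{X_1X_2}(\mathbf x_1,\mathbf x_2)/Q_{12}$ on $\tilde{\mathcal D}^{(n)}_\gamma$ and $0$ elsewhere, independent of $(\mathbf K_1,\mathbf K_2)$; $\tilde C_i^{(n)}:=\Phi_i^{(n)}(\mathbf K_i,\tilde{\mathbf X}_i)$. Equivalently, the joint law of $(\tilde C_1^{(n)},\tilde C_2^{(n)},\tilde{\mathbf X}_1,\tilde{\mathbf X}_2)$ is that of $(C_1^{(n)},C_2^{(n)},\mathbf X_1,\mathbf X_2)$ conditioned on $(\mathbf X_1,\mathbf X_2)\in\tilde{\mathcal D}^{(n)}_\gamma$. *)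

(* Defs.v *)
From HB Require Import structures.
From mathcomp Require Import all_boot all_order all_algebra.
From mathcomp Require Import reals exp.

Set Implicit Arguments.
Unset Strict Implicit.
Unset Printing Implicit Defensive.

Import Order.TTheory GRing.Theory Num.Theory.
Local Open Scope ring_scope.

Section Info.
Variable R : realType.

Definition log2 (x : R) : R := ln x / ln 2.

Definition is_pmf (T : finType) (p : T -> R) : Prop :=
  (forall t, 0 <= p t) /\ \sum_t p t = 1.

Definition law (T U : finType) (P : T -> R) (f : T -> U) (u : U) : R :=
  \sum_(t | f t == u) P t.

(* Shannon entropy H(f) of the random variable f (base 2, 0 log 0 = 0) *)
Definition entropy (T U : finType) (P : T -> R) (f : T -> U) : R :=
  - \sum_u law P f u * log2 (law P f u).

Definition centropy (T U V : finType) (P : T -> R) (f : T -> U) (g : T -> V) : R :=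
  - \sum_u \sum_v law P (fun t => (f t, g t)) (u, v) *
        log2 (law P (fun t => (f t, g t)) (u, v) / law P g v).

Variables (X1 X2 : finType).

Definition marg1 (p : X1 * X2 -> R) (a : X1) : R := \sum_b p (a, b).
Definition marg2 (p : X1 * X2 -> R) (b : X2) : R := \sum_a p (a, b).

Variable n : nat.

Definition pn (p : X1 * X2 -> R)
  (x : {ffun 'I_n -> X1} * {ffun 'I_n -> X2}) : R :=
  \prod_(i < n) p (x.1 i, x.2 i).

Definition pn_1g2 (p : X1 * X2 -> R) (x1 : {ffun 'I_n -> X1}) (x2 : {ffun 'I_n -> X2}) : R :=
  \prod_(i < n) (p (x1 i, x2 i) / marg2 p (x2 i)).
Definition pn_2g1 (p : X1 * X2 -> R) (x1 : {ffun 'I_n -> X1}) (x2 : {ffun 'I_n -> X2}) : R :=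
  \prod_(i < n) (p (x1 i, x2 i) / marg1 p (x1 i)).

Definition H1g2 (p : X1 * X2 -> R) : R := centropy p (fun t => t.1) (fun t => t.2).
Definition H2g1 (p : X1 * X2 -> R) : R := centropy p (fun t => t.2) (fun t => t.1).
Definition H12 (p : X1 * X2 -> R) : R := entropy p id.

Definition typical (p : X1 * X2 -> R) (gamma : R)
  (x : {ffun 'I_n -> X1} * {ffun 'I_n -> X2}) : bool :=
  [&& `| n%:R^-1 * log2 (pn_1g2 p x.1 x.2)^-1 - H1g2 p | <= gamma,
      `| n%:R^-1 * log2 (pn_2g1 p x.1 x.2)^-1 - H2g1 p | <= gamma &
      `| n%:R^-1 * log2 (pn p x)^-1 - H12 p | <= gamma].

End Info.

(* Main.v *)
Require Import Defs.
From HB Require Import structures.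
From mathcomp Require Import all_boot all_order all_algebra.
From mathcomp Require Import reals exp.
From mathcomp Require Import ring lra.
Import Order.TTheory GRing.Theory Num.Theory.
Local Open Scope ring_scope.

Section Helpers.
Variable R : realType.

Lemma ln2_gt0 : 0 < ln (2 : R).
Proof. by apply: ln_gt0; rewrite ltr1n. Qed.

Lemma log2M (x y : R) : 0 < x -> 0 < y -> log2 (x * y) = log2 x + log2 y.
Proof. by move=> hx hy; rewrite /log2 lnM ?posrE // mulrDl. Qed.

Lemma log2V (x : R) : 0 < x -> log2 x^-1 = - log2 x.
Proof. by move=> hx; rewrite /log2 lnV ?posrE // mulNr. Qed.

Lemma log2_div (x y : R) : 0 < x -> 0 < y -> log2 (x / y) = log2 x - log2 y.
Proof. by move=> hx hy; rewrite log2M ?invr_gt0 // log2V. Qed.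

Lemma log21 : log2 (1 : R) = 0.
Proof. by rewrite /log2 ln1 mul0r. Qed.

Lemma log2_le (x : R) : 0 < x -> log2 x <= (x - 1) / ln 2.
Proof.
move=> hx; rewrite /log2 ler_pM2r ?invr_gt0 ?ln2_gt0 //.
have h : 1 + (x - 1) = x by ring.
have := @le_ln1Dx R (x - 1); rewrite h; apply; lra.
Qed.

Lemma psum_gt0_ex {I : finType} {P : pred I} {a : I -> R} :
  (forall i, P i -> 0 <= a i) -> 0 < \sum_(i | P i) a i ->
  exists2 i, P i & 0 < a i.
Proof.
move=> ha; case: (pickP (fun i => P i && (0 < a i))) => [i /andP[]|h].
  by exists i.
rewrite big1 ?ltxx // => i Pi.
by have := h i; rewrite Pi /= => /negbT; rewrite lt0r ha // andbT negbK => /eqP.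
Qed.

Lemma logsum (I : finType) (P : pred I) (a b : I -> R) (B : R) :
  (forall i, P i -> 0 <= a i) -> (forall i, P i -> 0 <= b i) ->
  (forall i, P i -> 0 < a i -> 0 < b i) -> \sum_(i | P i) b i <= B ->
  \sum_(i | P i) - (a i * log2 (a i / b i)) <=
  - ((\sum_(i | P i) a i) * log2 ((\sum_(i | P i) a i) / B)).
Proof.
move=> ha hb hab hB.
set A := \sum_(i | P i) a i.
have A0 : 0 <= A by apply: sumr_ge0.
case: (eqVneq A 0) => [Ae|Anz].
  rewrite Ae mul0r oppr0 big1 // => i Pi.
  have := (psumr_eq0P ha Ae) i Pi => ->; by rewrite mul0r oppr0.
have Ap : 0 < A by rewrite lt0r Anz.
have [i0 Pi0 ai0] := psum_gt0_ex ha Ap.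
have Bp : 0 < B.
  apply: (lt_le_trans _ hB); apply: (lt_le_trans (hab _ Pi0 ai0)).
  rewrite (bigD1 i0) //= lerDl; apply: sumr_ge0 => j /andP[Pj _]; exact: hb.
have l2 := ln2_gt0.
have pt : forall i, P i ->
   - (a i * log2 (a i / b i)) + a i * log2 (A / B) <= (b i * A / B - a i) / ln 2.
  move=> i Pi; have [ai|] := ltP 0 (a i); last first.
    move=> ai; have -> : a i = 0 by apply/eqP; rewrite eq_le ai ha.
    rewrite !mul0r oppr0 add0r addr0 divr_ge0 ?(ltW l2) //.
    by rewrite mulr_ge0 ?invr_ge0 ?(ltW Bp) // mulr_ge0 ?hb.
  have bi := hab i Pi ai.
  set r := b i * A / (a i * B).
  have rp : 0 < r by rewrite /r divr_gt0 // mulr_gt0.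
  have e : - (a i * log2 (a i / b i)) + a i * log2 (A / B) = a i * log2 r.
    rewrite /r !log2_div ?mulr_gt0 // !log2M //.
    ring.
  rewrite e; apply: le_trans (_ : a i * ((r - 1) / ln 2) <= _).
    by rewrite ler_pM2l // log2_le.
  have -> : a i * ((r - 1) / ln 2) = (b i * A / B - a i) / ln 2.
    rewrite /r; field.
    by rewrite !lt0r_neq0.
  by [].
have := ler_sum (index_enum I) pt.
rewrite big_split /= -mulr_suml -/A.
have -> : \sum_(i | P i) (b i * A / B - a i) / ln 2
          = ((\sum_(i | P i) b i) * A / B - A) / ln 2.
  by rewrite -mulr_suml sumrB -/A -!mulr_suml.
move=> h; have : \sum_(i | P i) - (a i * log2 (a i / b i)) + A * log2 (A / B) <= 0.
  apply: (le_trans h); rewrite ler_pdivrMr // mul0r subr_le0.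
  by rewrite ler_pdivrMr // mulrC ler_pM2l.
move=> h2; lra.
Qed.
End Helpers.
Section Core.
Variable R : realType.

Lemma sum_pair (A K : finType) (F : A * K -> R) :
  \sum_w F w = \sum_x \sum_k F (x, k).
Proof. by rewrite pair_big; apply: eq_bigr => -[]. Qed.

Variables (A K C V : finType).

Lemma stage1 (Pt : A -> R) (pK : K -> R) (c : K -> A -> C) (v : A -> V) :
 (forall x, 0 <= Pt x) -> (forall k, 0 <= pK k) -> \sum_k pK k = 1 ->
 (forall k x x', 0 < Pt x -> 0 < Pt x' -> c k x = c k x' -> v x = v x' -> x = x') ->
 \sum_x Pt x * - log2 (Pt x / (\sum_(x' | v x' == v x) Pt x')) <=
 centropy (fun w : A * K => Pt w.1 * pK w.2) (fun w => c w.2 w.1) (fun w => v w.1).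
Proof.
move=> hP hK sK inj.
pose T := fun y => \sum_(x' | v x' == y) Pt x'.
change (\sum_x Pt x * - log2 (Pt x / T (v x)) <=
 centropy (fun w : A * K => Pt w.1 * pK w.2) (fun w => c w.2 w.1) (fun w => v w.1)).
pose P := fun w : A * K => Pt w.1 * pK w.2.
pose b := fun w : A * K => if 0 < Pt w.1 then pK w.2 * T (v w.1) else 0.
have hT : forall x, 0 <= T x by move=> y; apply: sumr_ge0.
have hTx : forall x, Pt x <= T (v x).
  by move=> x; rewrite /T (bigD1 x) //= lerDl sumr_ge0.
have hPw : forall w, 0 <= P w by move=> w; rewrite mulr_ge0.
have hb : forall w, 0 <= b w by move=> w; rewrite /b; case: ifP => // _; rewrite mulr_ge0.
have hPb : forall w, 0 < P w -> 0 < b w.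
  move=> [x k]; rewrite /P /b /=.
  have [px|px] := ltP 0 (Pt x); last first.
    have -> : Pt x = 0 by apply/eqP; rewrite eq_le px hP.
    by rewrite mul0r ltxx.
  rewrite pmulr_rgt0 // => pk; rewrite mulr_gt0 //; exact: lt_le_trans px (hTx x).
rewrite /centropy -sumrN.
apply: le_trans (_ : \sum_u \sum_y \sum_(w | (c w.2 w.1, v w.1) == (u, y))
                        - (P w * log2 (P w / b w)) <= _); last first.
  apply: ler_sum => u _; rewrite -sumrN; apply: ler_sum => y _.
  apply: logsum => [w _|w _|w _|]; [exact: hPw|exact: hb|exact: hPb|].
  have -> : law (fun w : A * K => Pt w.1 * pK w.2) (fun w => v w.1) y = T y.
    rewrite /law /T.
    transitivity (\sum_(x | v x == y) \sum_k Pt x * pK k).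
      by rewrite pair_big_dep; apply: eq_bigl => -[x k] /=; rewrite andbT.
    by apply: eq_bigr => x _; rewrite -mulr_sumr sK mulr1.
  rewrite big_mkcond sum_pair exchange_big /=.
  apply: le_trans (_ : \sum_k pK k * T y <= _); last by rewrite -mulr_suml sK mul1r.
  apply: ler_sum => k _.
  case: (pickP (fun x => ((c k x, v x) == (u, y)) && (0 < Pt x))) => [x0 /andP[e0 p0]|none].
    rewrite (bigD1 x0) //= e0 big1 ?addr0.
      by rewrite /b /= p0; move: e0 => /eqP[_ ->].
    move=> x nx; case: ifP => // ex; rewrite /b /=; case: ifP => // px.
    move: ex e0 => /eqP[ex1 ex2] /eqP[e1 e2].
    by move: nx; rewrite (inj k x x0) ?px ?eqxx // ?ex1 ?e1 ?ex2 ?e2.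
  rewrite big1 ?mulr_ge0 // => x _; case: ifP => // ex; rewrite /b /=.
  by have := none x; rewrite ex /= => ->.
have <- : \sum_w - (P w * log2 (P w / b w)) =
          \sum_u \sum_y \sum_(w | (c w.2 w.1, v w.1) == (u, y))
                        - (P w * log2 (P w / b w)).
  rewrite (partition_big (fun w => (c w.2 w.1, v w.1)) xpredT) //=.
  by rewrite pair_big; apply: eq_bigr => -[u y].
rewrite sum_pair le_eqVlt; apply/orP; left; apply/eqP; apply: eq_bigr => x _.
rewrite -[LHS]mulr1 -sK mulr_sumr; apply: eq_bigr => k _.
rewrite /P /b /=.
have [px|px] := ltP 0 (Pt x); last first.
  have -> : Pt x = 0 by apply/eqP; rewrite eq_le px hP.
  by rewrite !(mul0r, mulr0, oppr0).
have [pk|pk] := ltP 0 (pK k); last first.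
  have -> : pK k = 0 by apply/eqP; rewrite eq_le pk hK.
  by rewrite !(mul0r, mulr0, oppr0).
have Tp : 0 < T (v x) by exact: lt_le_trans px (hTx x).
have -> : Pt x * pK k / (pK k * T (v x)) = Pt x / T (v x).
  by field; rewrite !lt0r_neq0.
ring.
Qed.
End Core.
Section Core2.
Variable R : realType.
Variables (A V : finType).

Lemma stage2 (Pt : A -> R) (v : A -> V) (m : V -> R) (Kc : R) :
 (forall x, 0 <= Pt x) -> \sum_x Pt x = 1 -> (forall y, 0 <= m y) -> \sum_y m y <= 1 ->
 (forall x, 0 < Pt x -> 0 < m (v x) /\ Kc <= - log2 (Pt x / m (v x))) ->
 Kc <= \sum_x Pt x * - log2 (Pt x / (\sum_(x' | v x' == v x) Pt x')).
Proof.
move=> hP s1 hm sm hx.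
pose T := fun y => \sum_(x' | v x' == y) Pt x'.
change (Kc <= \sum_x Pt x * - log2 (Pt x / T (v x))).
have hT : forall x, 0 <= T x by move=> y; apply: sumr_ge0.
have hTx : forall x, Pt x <= T (v x).
  by move=> x; rewrite /T (bigD1 x) //= lerDl sumr_ge0.
pose L := fun y => log2 (T y / m y).
have sT : \sum_y T y = 1.
  by rewrite -s1 (partition_big v xpredT).
apply: le_trans (_ : \sum_x Pt x * (Kc + L (v x)) <= _).
  have -> : \sum_x Pt x * (Kc + L (v x)) = Kc + \sum_y T y * L y.
    rewrite (eq_bigr (fun x => Kc * Pt x + Pt x * L (v x))); last by move=> x _; ring.
    rewrite big_split /= -mulr_sumr s1 mulr1; congr (_ + _).
    rewrite (partition_big v xpredT) //=; apply: eq_bigr => y _.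
    rewrite /T mulr_suml; apply: eq_bigr => x /eqP <-; done.
  rewrite lerDl.
  have := @logsum R V xpredT T m 1 (fun y _ => hT y) (fun y _ => hm y).
  rewrite sT divr1 log21 mulr0 oppr0 => h.
  have : \sum_y - (T y * log2 (T y / m y)) <= 0.
    apply: h => //= y _ Ty.
    have [x /eqP vx px] := @psum_gt0_ex R A (fun x => v x == y) Pt (fun x _ => hP x) Ty.
    by rewrite -vx; case: (hx x px).
  by rewrite sumrN oppr_le0.
apply: ler_sum => x _.
have [px|px] := ltP 0 (Pt x); last first.
  have -> : Pt x = 0 by apply/eqP; rewrite eq_le px hP.
  by rewrite !mul0r.
rewrite ler_pM2l //.
have [mp hk] := hx x px.
have Tp : 0 < T (v x) by exact: lt_le_trans px (hTx x).
rewrite /L !log2_div // in hk *.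
lra.
Qed.

Lemma core (K C : finType) (Pt : A -> R) (pK : K -> R) (c : K -> A -> C) (v : A -> V)
  (m : V -> R) (Kc : R) :
 (forall x, 0 <= Pt x) -> \sum_x Pt x = 1 ->
 (forall k, 0 <= pK k) -> \sum_k pK k = 1 ->
 (forall k x x', 0 < Pt x -> 0 < Pt x' -> c k x = c k x' -> v x = v x' -> x = x') ->
 (forall y, 0 <= m y) -> \sum_y m y <= 1 ->
 (forall x, 0 < Pt x -> 0 < m (v x) /\ Kc <= - log2 (Pt x / m (v x))) ->
 Kc <= centropy (fun w : A * K => Pt w.1 * pK w.2) (fun w => c w.2 w.1) (fun w => v w.1).
Proof.
move=> hP s1 hK sK inj hm sm hx.
apply: (le_trans _ (@stage1 R A K C V Pt pK c v hP hK sK inj)).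
exact: stage2.
Qed.
End Core2.
Section Src.
Variable R : realType.

Lemma entropy_unit (W U : finType) (P : W -> R) (f : W -> U) :
  \sum_w P w = 1 -> entropy P f = centropy P f (fun _ => tt).
Proof.
move=> s1; rewrite /entropy /centropy; congr (- _); apply: eq_bigr => u _.
rewrite (bigD1 tt) //= big1 ?addr0; last by case.
have -> : law P (fun=> tt) tt = 1 by rewrite /law -s1; apply: eq_bigl.
rewrite divr1; congr (_ * log2 _); rewrite /law; apply: eq_bigl => w;
  by rewrite xpair_eqE andbT.
Qed.

Lemma from_typ (n : nat) (L H g : R) : (0 < n)%N ->
  `|n%:R^-1 * L - H| <= g -> n%:R * (H - g) <= L.
Proof.
move=> hn; rewrite ler_norml => /andP[h1 _].
rewrite -ler_pdivlMl ?ltr0n //; lra.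
Qed.

Variables (X1 X2 : finType).

Lemma prod_pmf (I : finType) (X : finType) (f : X -> R) :
  \sum_x f x = 1 -> \sum_(y : {ffun I -> X}) \prod_i f (y i) = 1.
Proof.
move=> s1; have := bigA_distr_bigA (fun (_ : I) j => f j); move=> <-.
by apply: big1 => i _.
Qed.

Lemma marg1_sum (q : X1 * X2 -> R) : is_pmf q -> \sum_a marg1 q a = 1.
Proof. by move=> [_ s1]; rewrite -s1 /marg1 pair_big; apply: eq_bigr => -[]. Qed.

Lemma marg2_sum (q : X1 * X2 -> R) : is_pmf q -> \sum_b marg2 q b = 1.
Proof.
by move=> [_ s1]; rewrite -s1 /marg2 exchange_big pair_big; apply: eq_bigr => -[].
Qed.

Lemma marg1_ge (q : X1 * X2 -> R) a b : is_pmf q -> q (a, b) <= marg1 q a.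
Proof.
by move=> [h _]; rewrite /marg1 (bigD1 b) //= lerDl sumr_ge0.
Qed.

Lemma marg2_ge (q : X1 * X2 -> R) a b : is_pmf q -> q (a, b) <= marg2 q b.
Proof.
by move=> [h _]; rewrite /marg2 (bigD1 a) //= lerDl sumr_ge0.
Qed.

Variable n : nat.

Lemma sum_pn (q : X1 * X2 -> R) : is_pmf q -> \sum_x pn (n:=n) q x = 1.
Proof.
move=> hq; rewrite sum_pair.
transitivity (\sum_(x1 : {ffun 'I_n -> X1}) \prod_i marg1 q (x1 i)).
  apply: eq_bigr => x1 _; rewrite /pn /marg1 /=.
  by rewrite (bigA_distr_bigA (fun i b => q (x1 i, b))).
exact/prod_pmf/marg1_sum.
Qed.

Lemma pn_ge0 (q : X1 * X2 -> R) x : is_pmf q -> 0 <= pn (n:=n) q x.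
Proof. by move=> [h _]; apply: prodr_ge0. Qed.

End Src.
Theorem lemma3 (R : realType) (X1 X2 : finType)
  (p pK : X1 * X2 -> R) (hp : is_pmf p) (hpK : is_pmf pK)
  (n : nat) (hn : (0 < n)%N)
  (C1 C2 : finType) (M1 M2 : Type)
  (Phi1 : {ffun 'I_n -> X1} -> {ffun 'I_n -> X1} -> C1)
  (Phi2 : {ffun 'I_n -> X2} -> {ffun 'I_n -> X2} -> C2)
  (Psi : {ffun 'I_n -> X1} -> {ffun 'I_n -> X2} -> C1 -> C2 ->
         {ffun 'I_n -> X1} * {ffun 'I_n -> X2})
  (phi1 : {ffun 'I_n -> X1} -> M1) (phi2 : {ffun 'I_n -> X2} -> M2)
  (psi : M1 -> M2 -> {ffun 'I_n -> X1} * {ffun 'I_n -> X2})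
  (hdec : forall k1 k2 x1 x2,
     Psi k1 k2 (Phi1 k1 x1) (Phi2 k2 x2) = psi (phi1 x1) (phi2 x2))
  (gamma : R) (hgamma : 0 < gamma) :
  let Dt := fun x : {ffun 'I_n -> X1} * {ffun 'I_n -> X2} =>
              typical p gamma x && (psi (phi1 x.1) (phi2 x.2) == x) in
  let Q12 := \sum_(x | Dt x) pn p x in
  (* sample space: (source pair, key pair); law of (tilde X, K) *)
  let P := fun w : ({ffun 'I_n -> X1} * {ffun 'I_n -> X2}) *
                   ({ffun 'I_n -> X1} * {ffun 'I_n -> X2}) =>
             (if Dt w.1 then pn p w.1 / Q12 else 0) * pn pK w.2 in
  let Xt1 := fun w : ({ffun 'I_n -> X1} * {ffun 'I_n -> X2}) *
                     ({ffun 'I_n -> X1} * {ffun 'I_n -> X2}) => w.1.1 in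
  let Xt2 := fun w : ({ffun 'I_n -> X1} * {ffun 'I_n -> X2}) *
                     ({ffun 'I_n -> X1} * {ffun 'I_n -> X2}) => w.1.2 in
  let Ct1 := fun w : ({ffun 'I_n -> X1} * {ffun 'I_n -> X2}) *
                     ({ffun 'I_n -> X1} * {ffun 'I_n -> X2}) => Phi1 w.2.1 w.1.1 in
  let Ct2 := fun w : ({ffun 'I_n -> X1} * {ffun 'I_n -> X2}) *
                     ({ffun 'I_n -> X1} * {ffun 'I_n -> X2}) => Phi2 w.2.2 w.1.2 in
  0 < Q12 ->
  [/\ centropy P Ct1 Xt2 >= n%:R * (H1g2 p - gamma) + log2 Q12,
      centropy P Ct2 Xt1 >= n%:R * (H2g1 p - gamma) + log2 Q12 &
      entropy P (fun w => (Ct1 w, Ct2 w)) >= n%:R * (H12 p - gamma) + log2 Q12].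
Proof.
move=> Dt Q12 P Xt1 Xt2 Ct1 Ct2 Qp.
have hp0 : forall a, 0 <= p a by case: hp.
pose Pt := fun x : {ffun 'I_n -> X1} * {ffun 'I_n -> X2} =>
  if Dt x then pn p x / Q12 else 0.
have hPt : forall x, 0 <= Pt x.
  move=> x; rewrite /Pt; case: ifP => // _; apply: divr_ge0; [exact: (@pn_ge0 R X1 X2 n p x hp) | exact: ltW].
have sPt : \sum_x Pt x = 1.
  rewrite /Pt -big_mkcond /= -mulr_suml divff //; exact: lt0r_neq0.
have hpK0 : forall k : {ffun 'I_n -> X1} * {ffun 'I_n -> X2}, 0 <= pn pK k by move=> k; exact: (@pn_ge0 R X1 X2 n pK k hpK).
have spK : \sum_(k : {ffun 'I_n -> X1} * {ffun 'I_n -> X2}) pn pK k = 1 by exact: (@sum_pn R X1 X2 n pK hpK).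
have hPos : forall x, 0 < Pt x -> [/\ Dt x, 0 < pn p x & Pt x = pn p x / Q12].
  move=> x; rewrite /Pt; case: ifP => Dx; last by rewrite ltxx.
  by rewrite pmulr_lgt0 ?invr_gt0.
have decx : forall k1 k2 x, Dt x -> Psi k1 k2 (Phi1 k1 x.1) (Phi2 k2 x.2) = x.
  move=> k1 k2 x /andP[_ /eqP e]; by rewrite hdec.
have hQ : 0 < Q12 := Qp.
split.
- pose m := fun y : {ffun 'I_n -> X2} => \prod_i marg2 p (y i).
  apply: (@core R _ _ _ _ Pt (pn pK) (fun k x => Phi1 k.1 x.1) (fun x => x.2) m).
  + exact: hPt.
  + exact: sPt.
  + exact: hpK0.
  + exact: spK.
  + move=> k x x' /hPos[Dx _ _] /hPos[Dx' _ _] ec ev.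
    by rewrite -(decx k.1 k.2 x Dx) -(decx k.1 k.2 x' Dx') ec ev.
  + by move=> y; apply: prodr_ge0 => i _; apply: sumr_ge0.
  + rewrite /m (@prod_pmf R _ _ (marg2 p)) //; exact: (@marg2_sum R X1 X2 p hp).
  + move=> x /hPos[Dx pnp ->].
    have mge : pn p x <= m x.2.
      by apply: ler_prod => i _; rewrite hp0 /=; exact: marg2_ge.
    have mp : 0 < m x.2 by exact: lt_le_trans pnp mge.
    split => //.
    move: Dx => /andP[/and3P[t1 _ _] _].
    have := @from_typ R n _ _ _ hn t1.
    have e : pn_1g2 p x.1 x.2 = pn p x / m x.2 by rewrite /pn_1g2 prodf_div.
    rewrite e log2V ?divr_gt0 // log2_div // log2_div ?divr_gt0 // log2_div //.
    lra.
- pose m := fun y : {ffun 'I_n -> X1} => \prod_i marg1 p (y i).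
  apply: (@core R _ _ _ _ Pt (pn pK) (fun k x => Phi2 k.2 x.2) (fun x => x.1) m).
  + exact: hPt.
  + exact: sPt.
  + exact: hpK0.
  + exact: spK.
  + move=> k x x' /hPos[Dx _ _] /hPos[Dx' _ _] ec ev.
    by rewrite -(decx k.1 k.2 x Dx) -(decx k.1 k.2 x' Dx') ec ev.
  + by move=> y; apply: prodr_ge0 => i _; apply: sumr_ge0.
  + rewrite /m (@prod_pmf R _ _ (marg1 p)) //; exact: (@marg1_sum R X1 X2 p hp).
  + move=> x /hPos[Dx pnp ->].
    have mge : pn p x <= m x.1.
      by apply: ler_prod => i _; rewrite hp0 /=; exact: marg1_ge.
    have mp : 0 < m x.1 by exact: lt_le_trans pnp mge.
    split => //.
    move: Dx => /andP[/and3P[_ t2 _] _].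
    have := @from_typ R n _ _ _ hn t2.
    have e : pn_2g1 p x.1 x.2 = pn p x / m x.1 by rewrite /pn_2g1 prodf_div.
    rewrite e log2V ?divr_gt0 // log2_div // log2_div ?divr_gt0 // log2_div //.
    lra.
- have sP : \sum_w P w = 1.
    rewrite sum_pair -sPt; apply: eq_bigr => x _.
    by rewrite /P /= -mulr_sumr spK mulr1.
  rewrite entropy_unit //.
  apply: (@core R _ _ _ _ Pt (pn pK) (fun k x => (Phi1 k.1 x.1, Phi2 k.2 x.2))
            (fun _ => tt) (fun _ => 1)).
  + exact: hPt.
  + exact: sPt.
  + exact: hpK0.
  + exact: spK.
  + move=> k x x' /hPos[Dx _ _] /hPos[Dx' _ _] [e1 e2] _.
    by rewrite -(decx k.1 k.2 x Dx) -(decx k.1 k.2 x' Dx') e1 e2.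
  + by [].
  + by rewrite (bigD1 tt) //= big1 ?addr0 //; case.
  + move=> x /hPos[Dx pnp ->]; split => //.
    move: Dx => /andP[/and3P[_ _ t3] _].
    have := @from_typ R n _ _ _ hn t3.
    rewrite divr1 log2V // log2_div //.
    lra.
Qed.
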